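(* Let $g>0$ and consider the one-dimensional shallow water system $$\partial_t h+\partial_x q=0,\qquad \partial_t q+\partial_x\Big(\frac{q^2}{h}+\tfrac12 g h^2\Big)=0,$$ with state $u=(h,q)$, $h>0$, $q=hv$. Let $u_l=(h_l,q_l)$ and $u_r=(h_r,q_r)$ be subcritical states, i.e. $|\mathcal{F}_l|<1$ and $|\mathcal{F}_r|<1$, where $\mathcal{F}=v/\sqrt{gh}$. Then there exists a unique pair of states $u_1^b=(h_1^b,q_1^b)$, $u_2^b=(h_2^b,q_2^b)$ with $h_1^b,h_2^b>0$ such that $$u_1^b\in\mathcal{N}(u_l),\qquad u_2^b\in\mathcal{P}(u_r),\qquad q_1^b=q_2^b,\qquad h_1^b=h_2^b.$$
   Context: This models a junction between one incoming canal (canal 1, initial constant state $u_l$) and one outgoing canal (canal 2, initial constant state $u_r$), with conservation of mass $q_1^b=q_2^b$ and equal water heights $h_1^b=h_2^b$ at the junction. The Froude number of a state $(h,q)$ is $\mathcal{F}=v/\sqrt{gh}=q/(h\sqrt{gh})$; a state is subcritical (fluvial) if $|\mathcal{F}|<1$ and supercritical (torrential) if $|\mathcal{F}|>1$. Riemann problems for the system are solved in the standard (Lax) sense, by a 1-wave and a 2-wave, each an admissible shock or a centered rarefaction (eigenvalues $\lambda_{1,2}=v\mp\sqrt{gh}$). For a state $u_l$, $\mathcal{N}(u_l)$ is the set of states $\hat u$ such that the solution of the Riemann problem with left state $u_l$ (for $x<0$) and right state $\hat u$ (for $x>0$) contains only waves with non-positive speed. For a state $u_r$, $\mathcal{P}(u_r)$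 is the set of states $\tilde u$ such that the solution of the Riemann problem with left state $\tilde u$ and right state $u_r$ contains only waves with non-negative speed. *)

(* Defs.v *)
From Stdlib Require Import Reals.
Open Scope R_scope.

Definition state := (R * R)%type.
Definition hh (u : state) : R := fst u.
Definition qq (u : state) : R := snd u.
Definition vel (u : state) : R := qq u / hh u.

Definition cel (g : R) (u : state) : R := sqrt (g * hh u).
Definition lam1 (g : R) (u : state) : R := vel u - cel g u.
Definition lam2 (g : R) (u : state) : R := vel u + cel g u.
Definition froude (g : R) (u : state) : R := vel u / cel g u.
Definition subcritical (g : R) (u : state) : Prop := Rabs (froude g u) < 1.

Definition flux1 (u : state) : R := qq u.
Definition flux2 (g : R) (u : state) : R := qq u ^ 2 / hh u + g * hh u ^ 2 / 2.

Definition rankine_hugoniot (g : R) (a b : state) (s : R) : Prop :=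
  s * (hh b - hh a) = flux1 b - flux1 a /\
  s * (qq b - qq a) = flux2 g b - flux2 g a.

(* Lax-admissible 1-shock / 2-shock of speed s from a (left) to b (right). *)
Definition shock1 (g : R) (a b : state) (s : R) : Prop :=
  rankine_hugoniot g a b s /\
  lam1 g b < s < lam1 g a /\ s < lam2 g b.
Definition shock2 (g : R) (a b : state) (s : R) : Prop :=
  rankine_hugoniot g a b s /\
  lam2 g b < s < lam2 g a /\ lam1 g a < s.

(* Centered 1-rarefaction / 2-rarefaction from a (left) to b (right):
   b lies on the integral curve of the k-th eigenvector through a
   (the corresponding Riemann invariant v + 2c, resp. v - 2c, is constant)
   and the k-th eigenvalue increases from a to b. The wave fan occupies
   the speeds [lam_k a, lam_k b]. *)
Definition rare1 (g : R) (a b : state) : Prop :=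
  vel b + 2 * cel g b = vel a + 2 * cel g a /\ lam1 g a < lam1 g b.
Definition rare2 (g : R) (a b : state) : Prop :=
  vel b - 2 * cel g b = vel a - 2 * cel g a /\ lam2 g a < lam2 g b.

Definition wave1_nonpos (g : R) (a b : state) : Prop :=
  b = a \/ (exists s, shock1 g a b s /\ s <= 0) \/ (rare1 g a b /\ lam1 g b <= 0).
Definition wave2_nonpos (g : R) (a b : state) : Prop :=
  b = a \/ (exists s, shock2 g a b s /\ s <= 0) \/ (rare2 g a b /\ lam2 g b <= 0).

Definition wave1_nonneg (g : R) (a b : state) : Prop :=
  b = a \/ (exists s, shock1 g a b s /\ 0 <= s) \/ (rare1 g a b /\ 0 <= lam1 g a).
Definition wave2_nonneg (g : R) (a b : state) : Prop :=
  b = a \/ (exists s, shock2 g a b s /\ 0 <= s) \/ (rare2 g a b /\ 0 <= lam2 g a).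

(* N(ul): states uh such that the (Lax) solution of the Riemann problem (ul, uh),
   consisting of a 1-wave ul -> um followed by a 2-wave um -> uh, has only
   waves of non-positive speed. *)
Definition N_set (g : R) (ul uh : state) : Prop :=
  exists um : state, 0 < hh um /\ wave1_nonpos g ul um /\ wave2_nonpos g um uh.

(* P(ur): states ut such that the solution of the Riemann problem (ut, ur)
   has only waves of non-negative speed. *)
Definition P_set (g : R) (ur ut : state) : Prop :=
  exists um : state, 0 < hh um /\ wave1_nonneg g ut um /\ wave2_nonneg g um ur.

Definition junction_ok (g : R) (ul ur u1 u2 : state) : Prop :=
  0 < hh u1 /\ 0 < hh u2 /\
  N_set g ul u1 /\ P_set g ur u2 /\ qq u1 = qq u2 /\ hh u1 = hh u2.

(* Main.v *)
Require Import Defs.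
From Stdlib Require Import Reals Lra Psatz.
Open Scope R_scope.

Lemma cel_sq g u : 0 < g -> 0 < hh u -> cel g u * cel g u = g * hh u.
Proof. intros; unfold cel; apply sqrt_sqrt; nra. Qed.

Lemma cel_pos g u : 0 < g -> 0 < hh u -> 0 < cel g u.
Proof. intros; unfold cel; apply sqrt_lt_R0; nra. Qed.

Lemma qq_eq u : 0 < hh u -> qq u = hh u * vel u.
Proof. intros; unfold vel; field; lra. Qed.

Lemma st_eq g u u' : 0 < g -> 0 < hh u -> 0 < hh u' ->
  cel g u = cel g u' -> vel u = vel u' -> u = u'.
Proof.
  intros Hg H1 H2 Hc Hv.
  assert (hh u = hh u').
  { pose proof (cel_sq g u Hg H1); pose proof (cel_sq g u' Hg H2).
    rewrite Hc in H. apply (Rmult_eq_reg_l g); lra. }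
  assert (qq u = qq u') by (rewrite !qq_eq; auto; rewrite H, Hv; auto).
  destruct u, u'; unfold hh, qq in *; simpl in *; subst; auto.
Qed.

Lemma subcrit_bounds g u : 0 < g -> 0 < hh u -> subcritical g u ->
  - cel g u < vel u < cel g u.
Proof.
  intros Hg Hh Hs. pose proof (cel_pos g u Hg Hh).
  unfold subcritical, froude in Hs. apply Rabs_def2 in Hs.
  assert (vel u = (vel u / cel g u) * cel g u) by (field; lra).
  split; nra.
Qed.
Lemma RH_core g ha hb va vb s : 0 < g -> 0 < ha -> 0 < hb ->
  s*(hb-ha) = hb*vb - ha*va ->
  s*(hb*vb - ha*va) = (hb*vb)^2/hb + g*hb^2/2 - ((ha*va)^2/ha + g*ha^2/2) ->
  ha*(va - s) = hb*(vb - s) /\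
  (hb - ha) * (g*ha*hb*(ha+hb)/2 - (ha*(va-s))^2) = 0.
Proof.
  intros Hg Ha Hb E1 E2.
  assert (Hm : ha*(va - s) = hb*(vb - s)) by nra.
  split; auto.
  remember (ha*(va-s)) as m eqn:Hmd.
  assert (Hva : va = s + m/ha) by (rewrite Hmd; field; lra).
  assert (Hvb : vb = s + m/hb) by (rewrite Hm; field; lra).
  subst va vb.
  assert (E3 : (hb - ha) * (g*ha*hb*(ha+hb)/2 - m^2) =
     ha*hb*((hb * (s + m / hb)) ^ 2 / hb + g * hb ^ 2 / 2 - ((ha * (s + m / ha)) ^ 2 / ha + g * ha ^ 2 / 2)
       - s * (hb * (s + m / hb) - ha * (s + m / ha)))) by (field; lra).
  rewrite E3, <- E2. ring.
Qed.

Lemma RH_build g ha hb va vb s m : 0 < g -> 0 < ha -> 0 < hb ->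
  m = ha*(va - s) -> m = hb*(vb - s) -> m^2 = g*ha*hb*(ha+hb)/2 ->
  rankine_hugoniot g (ha, ha*va) (hb, hb*vb) s.
Proof.
  intros Hg Ha Hb E1 E2 E3. unfold rankine_hugoniot, flux1, flux2, hh, qq; simpl.
  assert (Hva : va = s + m/ha) by (rewrite E1; field; lra).
  assert (Hvb : vb = s + m/hb) by (rewrite E2; field; lra).
  clear E1 E2. subst va vb. split.
  - field; lra.
  - apply (Rmult_eq_reg_l (ha*hb)); [|nra].
    transitivity (ha*hb*((hb * (s + m / hb)) ^ 2 / hb + g * hb ^ 2 / 2 - ((ha * (s + m / ha)) ^ 2 / ha + g * ha ^ 2 / 2)) - (hb - ha) * (g*ha*hb*(ha+hb)/2 - m^2)).
    + field. all: lra.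
    + rewrite E3. field; lra.
Qed.

Lemma RH_state g a b s : 0 < g -> 0 < hh a -> 0 < hh b -> rankine_hugoniot g a b s ->
  hh a * (vel a - s) = hh b * (vel b - s) /\
  (hh b - hh a) * (g*hh a*hh b*(hh a+hh b)/2 - (hh a*(vel a-s))^2) = 0.
Proof.
  intros Hg Ha Hb [E1 E2]. unfold flux1, flux2 in *.
  rewrite !(qq_eq a), !(qq_eq b) in * by auto.
  apply RH_core; auto.
Qed.

Lemma shock1_facts g a b s : 0 < g -> 0 < hh a -> 0 < hh b -> shock1 g a b s ->
  cel g a < cel g b /\ vel b < vel a /\
  (vel a - vel b)^2 * (2*(cel g a)^2*(cel g b)^2) =
     ((cel g b)^2 - (cel g a)^2)^2 * ((cel g a)^2 + (cel g b)^2).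
Proof.
  intros Hg Ha Hb [RH [[L1 L2] L3]]. unfold lam1, lam2 in *.
  destruct (RH_state g a b s Hg Ha Hb RH) as [Hm Hk].
  pose proof (cel_sq g a Hg Ha) as Hca. pose proof (cel_sq g b Hg Hb) as Hcb.
  pose proof (cel_pos g a Hg Ha). pose proof (cel_pos g b Hg Hb).
  set (ha := hh a) in *. set (hb := hh b) in *. set (va := vel a) in *.
  set (vb := vel b) in *. set (ca := cel g a) in *. set (cb := cel g b) in *.
  set (m := ha * (va - s)) in *.
  destruct (Rmult_integral _ _ Hk) as [Heq|Hm2].
  - exfalso. assert (hb = ha) by lra.
    assert (ca = cb) by (unfold ca, cb, cel; fold ha hb; rewrite H1; auto).
    assert (va = vb) by (unfold m in Hm; rewrite H1 in Hm; nra). lra.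
  - assert (Hmsq : m^2 = g*ha*hb*(ha+hb)/2) by lra. clear Hm2 Hk.
    assert (Hmp : m > ha*ca) by (unfold m; nra).
    assert (0 < ha*ca) by (apply Rmult_lt_0_compat; auto).
    assert (Hd0 : va = s + m/ha) by (unfold m; field; lra).
    clearbody m.
    assert (Hm3 : m^2 > (ha*ca)^2) by nra.
    assert (Hh1 : hb*(ha+hb) > 2*ha^2).
    { assert (g*ha*(hb*(ha+hb) - 2*ha^2) > 0) by nra. 
      assert (g*ha > 0) by nra. nra. }
    assert (Hhb : ha < hb) by nra.
    assert (Hcc : ca < cb) by nra.
    assert (Hd : va - vb = m*(hb - ha)/(ha*hb)).
    { assert (vb = s + m/hb) by (rewrite Hm; field; lra).
      rewrite H2, Hd0 at 1. field; lra. }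
    assert (0 < m * (hb - ha) / (ha*hb)).
    { apply Rdiv_lt_0_compat; nra. }
    split; [auto|split; [lra|]].
    replace (ca^2) with (g*ha) by (rewrite <- Hca; ring).
    replace (cb^2) with (g*hb) by (rewrite <- Hcb; ring).
    rewrite Hd.
    replace ((m*(hb-ha)/(ha*hb))^2) with (m^2 * ((hb-ha)/(ha*hb))^2) by (field; lra).
    rewrite Hmsq. field; lra.
Qed.

Lemma shock2_facts g a b s : 0 < g -> 0 < hh a -> 0 < hh b -> shock2 g a b s ->
  cel g b < cel g a /\ vel b < vel a /\
  (vel a - vel b)^2 * (2*(cel g a)^2*(cel g b)^2) =
     ((cel g a)^2 - (cel g b)^2)^2 * ((cel g a)^2 + (cel g b)^2).
Proof.
  intros Hg Ha Hb [RH [[L1 L2] L3]]. unfold lam1, lam2 in *.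
  destruct (RH_state g a b s Hg Ha Hb RH) as [Hm Hk].
  pose proof (cel_sq g a Hg Ha) as Hca. pose proof (cel_sq g b Hg Hb) as Hcb.
  pose proof (cel_pos g a Hg Ha). pose proof (cel_pos g b Hg Hb).
  set (ha := hh a) in *. set (hb := hh b) in *. set (va := vel a) in *.
  set (vb := vel b) in *. set (ca := cel g a) in *. set (cb := cel g b) in *.
  set (m := ha * (va - s)) in *.
  destruct (Rmult_integral _ _ Hk) as [Heq|Hm2].
  - exfalso. assert (hb = ha) by lra.
    assert (ca = cb) by (unfold ca, cb, cel; fold ha hb; rewrite H1; auto).
    assert (va = vb) by (unfold m in Hm; rewrite H1 in Hm; nra). lra.
  - assert (Hmsq : m^2 = g*ha*hb*(ha+hb)/2) by lra. clear Hm2 Hk.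
    assert (Hmn : m < 0) by (rewrite Hm; nra).
    assert (Hmp : m > - (ha*ca)) by (unfold m; nra).
    assert (0 < ha*ca) by (apply Rmult_lt_0_compat; auto).
    assert (Hd0 : va = s + m/ha) by (unfold m; field; lra).
    clearbody m.
    assert (Hm3 : m^2 < (ha*ca)^2) by nra.
    assert (Hh1 : hb*(ha+hb) < 2*ha^2).
    { assert (g*ha*(hb*(ha+hb) - 2*ha^2) < 0) by nra. 
      assert (g*ha > 0) by nra. nra. }
    assert (Hhb : hb < ha) by nra.
    assert (Hcc : cb < ca) by nra.
    assert (Hd : va - vb = m*(hb - ha)/(ha*hb)).
    { assert (vb = s + m/hb) by (rewrite Hm; field; lra).
      rewrite H2, Hd0 at 1. field; lra. }
    assert (0 < m * (hb - ha) / (ha*hb)).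
    { apply Rdiv_lt_0_compat; nra. }
    split; [auto|split; [lra|]].
    replace (ca^2) with (g*ha) by (rewrite <- Hca; ring).
    replace (cb^2) with (g*hb) by (rewrite <- Hcb; ring).
    rewrite Hd.
    replace ((m*(hb-ha)/(ha*hb))^2) with (m^2 * ((hb-ha)/(ha*hb))^2) by (field; lra).
    rewrite Hmsq. field; lra.
Qed.

Definition Qc (k w c v : R) : Prop :=
  (c = k /\ v = w) \/ (c < k /\ v + 2*c = w + 2*k) \/
  (k < c /\ v < w /\ (w - v)^2 * (2*k^2*c^2) = (c^2 - k^2)^2 * (k^2 + c^2)).

Lemma mono_T k x y : 0 < k -> k < x -> x < y ->
  (x^2-k^2)^2*(k^2+x^2)*y^2 < (y^2-k^2)^2*(k^2+y^2)*x^2.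
Proof.
  intros Hk Hx Hy.
  assert (HK : 0 < k^2) by nra.
  assert (HX : k^2 < x^2) by nra.
  assert (HY : x^2 < y^2) by nra.
  set (K := k^2) in *. set (X := x^2) in *. set (Y := y^2) in *.
  assert (E : X*(Y-K)^2 - Y*(X-K)^2 = (Y-X)*(X*Y - K^2)) by ring.
  assert (P1 : Y*(X-K)^2 < X*(Y-K)^2).
  { assert (0 < (Y-X)*(X*Y-K^2)).
    { apply Rmult_lt_0_compat; nra. }
    lra. }
  assert (0 <= Y*(X-K)^2) by (apply Rmult_le_pos; nra).
  nra.
Qed.

Lemma Qc_strict k w c v c' v' : 0 < k -> 0 < c ->
  Qc k w c v -> Qc k w c' v' -> c < c' -> v' < v.
Proof.
  intros Hk Hc Q Q' Hcc.
  destruct Q as [[E1 E2]|[[E1 E2]|[E1 [E2 E3]]]];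
  destruct Q' as [[F1 F2]|[[F1 F2]|[F1 [F2 F3]]]]; try lra.
  pose proof (mono_T k c c' Hk E1 Hcc) as HT.
  assert (Hd : (w - v)^2 < (w - v')^2).
  { assert (0 < 2*k^2*c^2*c'^2) by (assert (0<c') by lra; 
      repeat apply Rmult_lt_0_compat; nra).
    apply (Rmult_lt_reg_r (2*k^2*c^2*c'^2)); auto.
    replace ((w - v)^2 * (2*k^2*c^2*c'^2)) with ((w - v)^2 * (2*k^2*c^2) * c'^2) by ring.
    replace ((w - v')^2 * (2*k^2*c^2*c'^2)) with ((w - v')^2 * (2*k^2*c'^2) * c^2) by ring.
    rewrite E3, F3. lra. }
  nra.
Qed.

Lemma Qc_eq k w c v v' : 0 < k -> 0 < c ->
  Qc k w c v -> Qc k w c v' -> v = v'.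
Proof.
  intros Hk Hc Q Q'.
  destruct Q as [[E1 E2]|[[E1 E2]|[E1 [E2 E3]]]];
  destruct Q' as [[F1 F2]|[[F1 F2]|[F1 [F2 F3]]]]; try lra.
  assert (0 < 2*k^2*c^2) by (repeat apply Rmult_lt_0_compat; nra).
  assert (Hd : (w - v)^2 = (w - v')^2).
  { apply (Rmult_eq_reg_r (2*k^2*c^2)); [|lra]. rewrite E3, F3; auto. }
  nra.
Qed.

Definition C1 g ul u := u = ul \/ rare1 g ul u \/ exists s, shock1 g ul u s.
Definition C2 g ur u := u = ur \/ rare2 g u ur \/ exists s, shock2 g u ur s.

Lemma C1_Q g ul u : 0 < g -> 0 < hh ul -> 0 < hh u -> C1 g ul u ->
  Qc (cel g ul) (vel ul) (cel g u) (vel u).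
Proof.
  intros Hg Hl Hu [E|[[R1 R2]|[s Sh]]].
  - left; subst; auto.
  - right; left. unfold lam1 in R2. split; lra.
  - right; right. destruct (shock1_facts g ul u s Hg Hl Hu Sh) as [A [B C]].
    auto.
Qed.

Lemma C2_Q g ur u : 0 < g -> 0 < hh ur -> 0 < hh u -> C2 g ur u ->
  Qc (cel g ur) (- vel ur) (cel g u) (- vel u).
Proof.
  intros Hg Hr Hu [E|[[R1 R2]|[s Sh]]].
  - left; subst; auto.
  - right; left. unfold lam2 in R2. split; lra.
  - right; right. destruct (shock2_facts g u ur s Hg Hu Hr Sh) as [A [B C]].
    split; [auto|split; [lra|]].
    replace ((- vel ur - - vel u)^2 * (2*cel g ur^2*cel g u^2)) with
      ((vel u - vel ur)^2 * (2*cel g u^2*cel g ur^2)) by ring.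
    rewrite C; ring.
Qed.

Lemma C12_unique g ul ur p p' : 0 < g -> 0 < hh ul -> 0 < hh ur ->
  0 < hh p -> 0 < hh p' -> C1 g ul p -> C2 g ur p -> C1 g ul p' -> C2 g ur p' ->
  p = p'.
Proof.
  intros Hg Hl Hr Hp Hp' A1 A2 B1 B2.
  pose proof (C1_Q _ _ _ Hg Hl Hp A1) as QA1.
  pose proof (C2_Q _ _ _ Hg Hr Hp A2) as QA2.
  pose proof (C1_Q _ _ _ Hg Hl Hp' B1) as QB1.
  pose proof (C2_Q _ _ _ Hg Hr Hp' B2) as QB2.
  pose proof (cel_pos g ul Hg Hl). pose proof (cel_pos g ur Hg Hr).
  pose proof (cel_pos g p Hg Hp). pose proof (cel_pos g p' Hg Hp').
  destruct (total_order_T (cel g p) (cel g p')) as [[Hlt|Heq]|Hgt].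
  - exfalso. pose proof (Qc_strict _ _ _ _ _ _ H H1 QA1 QB1 Hlt).
    pose proof (Qc_strict _ _ _ _ _ _ H0 H1 QA2 QB2 Hlt). lra.
  - apply (st_eq g); auto. rewrite <- Heq in QB1.
    apply (Qc_eq _ _ _ _ _ H H1 QA1 QB1).
  - exfalso. pose proof (Qc_strict _ _ _ _ _ _ H H2 QB1 QA1 Hgt).
    pose proof (Qc_strict _ _ _ _ _ _ H0 H2 QB2 QA2 Hgt). lra.
Qed.

Lemma lam12 g u : 0 < g -> 0 < hh u -> lam1 g u < lam2 g u.
Proof. intros; pose proof (cel_pos g u H H0); unfold lam1, lam2; lra. Qed.

Lemma rare1_trans g a b c : rare1 g a b -> rare1 g b c -> rare1 g a c.
Proof. unfold rare1; intros [A B] [C D]; split; lra. Qed.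
Lemma rare2_trans g a b c : rare2 g a b -> rare2 g b c -> rare2 g a c.
Proof. unfold rare2; intros [A B] [C D]; split; lra. Qed.

Lemma W1np g ul u : 0 < g -> 0 < hh ul -> subcritical g ul -> wave1_nonpos g ul u ->
  C1 g ul u /\ lam1 g u <= 0 /\ (lam1 g u = 0 -> rare1 g ul u).
Proof.
  intros Hg Hl Hs [E|[[s [Sh Hs0]]|[R L]]].
  - subst u. pose proof (subcrit_bounds g ul Hg Hl Hs). unfold lam1.
    split; [left; auto|split; lra].
  - pose proof Sh as [RH [[L1 L2] L3]].
    split; [right; right; exists s; auto|split; lra].
  - split; [right; left; auto|split; auto].
Qed.

Lemma W2nn g ur u : 0 < g -> 0 < hh ur -> subcritical g ur -> wave2_nonneg g u ur ->
  C2 g ur u /\ 0 <= lam2 g u /\ (lam2 g u = 0 -> rare2 g u ur).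
Proof.
  intros Hg Hr Hs [E|[[s [Sh Hs0]]|[R L]]].
  - subst u. pose proof (subcrit_bounds g ur Hg Hr Hs). unfold lam2.
    split; [left; auto|split; lra].
  - pose proof Sh as [RH [[L1 L2] L3]].
    split; [right; right; exists s; auto|split; lra].
  - split; [right; left; auto|split; auto].
Qed.

Lemma W2np g a b : wave2_nonpos g a b ->
  b = a \/ lam2 g b < 0 \/ (rare2 g a b /\ lam2 g b <= 0).
Proof.
  intros [E|[[s [[RH [[L1 L2] L3]] Hs0]]|[R L]]]; auto.
  right; left; lra.
Qed.

Lemma W1nn g a b : wave1_nonneg g a b ->
  b = a \/ 0 < lam1 g a \/ (rare1 g a b /\ 0 <= lam1 g a).
Proof.
  intros [E|[[s [[RH [[L1 L2] L3]] Hs0]]|[R L]]]; auto.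
  right; left; lra.
Qed.

Lemma classify g ul ur u : 0 < g -> 0 < hh ul -> 0 < hh ur ->
  subcritical g ul -> subcritical g ur -> 0 < hh u ->
  N_set g ul u -> P_set g ur u ->
  exists p, 0 < hh p /\ C1 g ul p /\ C2 g ur p /\
   ((p = u /\ lam1 g u <= 0 /\ 0 <= lam2 g u)
    \/ (lam2 g p < 0 /\ lam2 g u = 0 /\ rare2 g u ur)
    \/ (0 < lam1 g p /\ lam1 g u = 0 /\ rare1 g ul u)).
Proof.
  intros Hg Hl Hr Sl Sr Hu [um [Hum [W1 W2]]] [um' [Hum' [V1 V2]]].
  destruct (W1np g ul um Hg Hl Sl W1) as [C1m [L1m R1m]].
  destruct (W2nn g ur um' Hg Hr Sr V2) as [C2m [L2m R2m]].
  pose proof (lam12 g u Hg Hu).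
  destruct (W2np g um u W2) as [E|[L|[R L]]].
  - subst um.
    destruct (W1nn g u um' V1) as [E'|[L'|[R' L']]].
    + subst um'. exists u. repeat split; auto.
    + lra.
    + assert (lam1 g u = 0) by lra.
      exists um'. split; auto. split.
      { right; left. apply rare1_trans with u; auto. }
      split; auto. right; right. destruct R' as [_ R']. split; [lra|split; auto].
  - destruct (W1nn g u um' V1) as [E'|[L'|[R' L']]].
    + subst um'. lra.
    + lra.
    + lra.
  - destruct (W1nn g u um' V1) as [E'|[L'|[R' L']]].
    + subst um'. assert (lam2 g u = 0) by lra.
      exists um. split; auto. split; auto. split.
      { right; left. apply rare2_trans with u; auto. }
      right; left. destruct R as [_ R]. split; [lra|split; auto].
    + lra.
    + lra.
Qed.

Lemma junction_unique g ul ur u1 u2 u1' u2' : 0 < g -> 0 < hh ul -> 0 < hh ur ->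
  subcritical g ul -> subcritical g ur ->
  junction_ok g ul ur u1 u2 -> junction_ok g ul ur u1' u2' -> u1' = u1 /\ u2' = u2.
Proof.
  intros Hg Hl Hr Sl Sr [H1 [H2 [N1 [P1 [Q1 E1]]]]] [H1' [H2' [N1' [P1' [Q1' E1']]]]].
  assert (u1 = u2) by (destruct u1, u2; unfold hh, qq in *; simpl in *; subst; auto).
  assert (u1' = u2') by (destruct u1', u2'; unfold hh, qq in *; simpl in *; subst; auto).
  subst u2 u2'. clear Q1 E1 Q1' E1' H2 H2'.
  rename u1 into u. rename u1' into u'.
  destruct (classify g ul ur u Hg Hl Hr Sl Sr H1 N1 P1) as [p [Hp [Cp1 [Cp2 T]]]].
  destruct (classify g ul ur u' Hg Hl Hr Sl Sr H1' N1' P1') as [p' [Hp' [Cp1' [Cp2' T']]]].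
  assert (p = p') by (apply (C12_unique g ul ur); auto). subst p'.
  pose proof (cel_pos g u Hg H1). pose proof (cel_pos g u' Hg H1').
  pose proof (lam12 g p Hg Hp).
  assert (u' = u); [|split; auto].
  destruct T as [[E [A B]]|[[A [B C]]|[A [B C]]]];
  destruct T' as [[E' [A' B']]|[[A' [B' C']]|[A' [B' C']]]];
  try (subst; lra); try lra.
  - subst; auto.
  - apply (st_eq g); auto; unfold rare2, lam2 in *; lra.
  - apply (st_eq g); auto; unfold rare1, lam1 in *; lra.
Qed.
Definition rr k c := sqrt ((k*k + c*c)/2).
Definition S1 k w c := w - (c*c - k*k) * rr k c / (k*c).
Definition S2 k w c := w + (c*c - k*k) * rr k c / (k*c).
Definition mx k c := (c + k + Rabs (c - k))/2.
Definition mn k c := (c + k - Rabs (c - k))/2.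
Definition P1 k w c := (w + 2*k - 2*mn k c) + S1 k w (mx k c) - w.
Definition P2 k w c := (w - 2*k + 2*mn k c) + S2 k w (mx k c) - w.

Lemma mx_ge' k c : k <= (c + k + Rabs (c - k)) * / 2.
Proof. pose proof (Rle_abs (c - k)). pose proof (Rabs_pos (c-k)). 
  destruct (Rle_dec k c); [rewrite Rabs_right by lra | rewrite Rabs_left by lra]; lra. Qed.

Lemma cont_f cl vl cr vr x : 0 < cl -> 0 < cr -> continuity_pt (fun c => P2 cr vr c - P1 cl vl c) x.
Proof.
  intros. unfold P1, P2, S1, S2, rr, mx, mn. reg.
  all: pose proof (mx_ge' cl x); pose proof (mx_ge' cr x).
  all: try (apply Rmult_le_pos; [|lra]; nra).
  all: apply Rmult_integral_contrapositive_currified; lra.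
Qed.

Definition mk (g c v : R) : state := (c*c/g, c*c/g*v).

Lemma hh_mk g c v : 0 < g -> 0 < c -> 0 < hh (mk g c v).
Proof. intros; unfold mk, hh; simpl. apply Rdiv_lt_0_compat; nra. Qed.
Lemma vel_mk g c v : 0 < g -> 0 < c -> vel (mk g c v) = v.
Proof. intros; unfold mk, vel, hh, qq; simpl. field; lra. Qed.
Lemma cel_mk g c v : 0 < g -> 0 < c -> cel g (mk g c v) = c.
Proof.
  intros; unfold mk, cel, hh; simpl.
  replace (g * (c*c/g)) with (c*c) by (field; lra). apply sqrt_square; lra.
Qed.
Lemma mk_repr g u : 0 < g -> 0 < hh u -> u = mk g (cel g u) (vel u).
Proof.
  intros. pose proof (cel_pos g u H H0).
  apply (st_eq g); auto using hh_mk.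
  - rewrite cel_mk; auto.
  - rewrite vel_mk; auto.
Qed.

Lemma mn_lo k c : c <= k -> mn k c = c.
Proof. intros; unfold mn; rewrite Rabs_left1 by lra; field. Qed.
Lemma mx_lo k c : c <= k -> mx k c = k.
Proof. intros; unfold mx; rewrite Rabs_left1 by lra; field. Qed.
Lemma mn_hi k c : k <= c -> mn k c = k.
Proof. intros; unfold mn; rewrite Rabs_right by lra; field. Qed.
Lemma mx_hi k c : k <= c -> mx k c = c.
Proof. intros; unfold mx; rewrite Rabs_right by lra; field. Qed.

Lemma S1_k k w : 0 < k -> S1 k w k = w.
Proof. intros; unfold S1. field; lra. Qed.
Lemma S2_k k w : 0 < k -> S2 k w k = w.
Proof. intros; unfold S2. field; lra. Qed.

Lemma P1_lo k w c : 0 < k -> c <= k -> P1 k w c = w + 2*k - 2*c.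
Proof. intros; unfold P1; rewrite mn_lo, mx_lo, S1_k by auto; ring. Qed.
Lemma P1_hi k w c : 0 < k -> k <= c -> P1 k w c = S1 k w c.
Proof. intros; unfold P1; rewrite mn_hi, mx_hi by auto; ring. Qed.
Lemma P2_lo k w c : 0 < k -> c <= k -> P2 k w c = w - 2*k + 2*c.
Proof. intros; unfold P2; rewrite mn_lo, mx_lo, S2_k by auto; ring. Qed.
Lemma P2_hi k w c : 0 < k -> k <= c -> P2 k w c = S2 k w c.
Proof. intros; unfold P2; rewrite mn_hi, mx_hi by auto; ring. Qed.

Lemma rr_facts k c : 0 < k -> k < c -> 0 < rr k c /\ rr k c * rr k c = (k*k+c*c)/2 /\
  k < rr k c /\ rr k c < c.
Proof.
  intros. unfold rr.
  assert (E : sqrt ((k*k+c*c)/2) * sqrt ((k*k+c*c)/2) = (k*k+c*c)/2)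
    by (apply sqrt_sqrt; nra).
  assert (0 < sqrt ((k*k+c*c)/2)) by (apply sqrt_lt_R0; nra).
  repeat split; auto; nra.
Qed.

Lemma wave1_build g cl vl c : 0 < g -> 0 < cl -> -cl < vl < cl -> 0 < c ->
  P1 cl vl c - c <= 0 -> wave1_nonpos g (mk g cl vl) (mk g c (P1 cl vl c)).
Proof.
  intros Hg Hcl Hvl Hc HP.
  destruct (total_order_T c cl) as [[Hlt|Heq]|Hgt].
  - rewrite P1_lo in * by lra. right; right. unfold rare1, lam1.
    rewrite !vel_mk, !cel_mk by auto. split; [split|]; lra.
  - subst. left. rewrite P1_lo by lra. f_equal; ring.
  - rewrite P1_hi in * by lra. unfold S1 in *.
    destruct (rr_facts cl c Hcl Hgt) as [Hr0 [Hr2 [Hr1 Hr3]]].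
    set (r := rr cl c) in *. clearbody r.
    set (v := vl - (c * c - cl * cl) * r / (cl * c)) in *.
    set (s := vl - c*r/cl).
    assert (Ev : v - s = r*cl/c) by (unfold v, s; field; lra).
    assert (I1 : r*cl/c < c).
    { apply (Rmult_lt_reg_r c); [lra|]. replace (r*cl/c*c) with (r*cl) by (field; lra). nra. }
    assert (I2 : c*r/cl > cl).
    { apply (Rmult_lt_reg_r cl); [lra|]. replace (c*r/cl*cl) with (c*r) by (field; lra). nra. }
    assert (I3 : 0 < r*cl/c) by (apply Rdiv_lt_0_compat; nra).
    right; left. exists s. split; [|unfold s; lra].
    split; [|unfold lam1, lam2; rewrite !vel_mk, !cel_mk by auto; unfold s in *; split; [split|]; lra].
    unfold mk. apply (RH_build g _ _ _ _ _ (cl*c*r/g)).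
    + auto.
    + apply Rdiv_lt_0_compat; nra.
    + apply Rdiv_lt_0_compat; nra.
    + unfold s; field; lra.
    + replace v with (s + r*cl/c) by lra. field; lra.
    + replace ((cl*c*r/g)^2) with (cl*cl*c*c*(r*r)/(g*g)) by (field; lra).
      rewrite Hr2. field; lra.
Qed.

Lemma wave2_build g cr vr c : 0 < g -> 0 < cr -> -cr < vr < cr -> 0 < c ->
  0 <= P2 cr vr c + c -> wave2_nonneg g (mk g c (P2 cr vr c)) (mk g cr vr).
Proof.
  intros Hg Hcr Hvr Hc HP.
  destruct (total_order_T c cr) as [[Hlt|Heq]|Hgt].
  - rewrite P2_lo in * by lra. right; right. unfold rare2, lam2.
    rewrite !vel_mk, !cel_mk by auto. split; [split|]; lra.
  - subst. left. rewrite P2_lo by lra. f_equal; ring.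
  - rewrite P2_hi in * by lra. unfold S2 in *.
    destruct (rr_facts cr c Hcr Hgt) as [Hr0 [Hr2 [Hr1 Hr3]]].
    set (r := rr cr c) in *. clearbody r.
    set (v := vr + (c * c - cr * cr) * r / (cr * c)) in *.
    set (s := vr + c*r/cr).
    assert (Ev : v - s = - (r*cr/c)) by (unfold v, s; field; lra).
    assert (I1 : r*cr/c < c).
    { apply (Rmult_lt_reg_r c); [lra|]. replace (r*cr/c*c) with (r*cr) by (field; lra). nra. }
    assert (I2 : c*r/cr > cr).
    { apply (Rmult_lt_reg_r cr); [lra|]. replace (c*r/cr*cr) with (c*r) by (field; lra). nra. }
    assert (I3 : 0 < r*cr/c) by (apply Rdiv_lt_0_compat; nra).
    right; left. exists s. split; [|unfold s; lra].
    split; [|unfold lam1, lam2; rewrite !vel_mk, !cel_mk by auto; unfold s in *; split; [split|]; lra].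
    unfold mk. apply (RH_build g _ _ _ _ _ (- (cr*c*r/g))).
    + auto.
    + apply Rdiv_lt_0_compat; nra.
    + apply Rdiv_lt_0_compat; nra.
    + replace v with (s - r*cr/c) by lra. field; lra.
    + unfold s; field; lra.
    + replace ((-(cr*c*r/g))^2) with (cr*cr*c*c*(r*r)/(g*g)) by (field; lra).
      rewrite Hr2. field; lra.
Qed.

Lemma root_exists cl vl cr vr : 0 < cl -> 0 < cr -> -cl < vl < cl -> -cr < vr < cr ->
  exists c0, 0 < c0 /\ P1 cl vl c0 = P2 cr vr c0.
Proof.
  intros Hcl Hcr Hvl Hvr.
  set (A := vl + 2*cl). set (K := vr - 2*cr).
  set (a := Rmin cl cr).
  assert (Ha1 : a <= cl) by apply Rmin_l. assert (Ha2 : a <= cr) by apply Rmin_r.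
  assert (Ha0 : 0 < a) by (unfold a; apply Rmin_glb_lt; auto).
  destruct (Rle_dec (A - K - 4*a) 0) as [Hle|Hgt].
  - exists ((A-K)/4). split; [unfold A, K; lra|].
    rewrite P1_lo, P2_lo by (auto; unfold A, K in *; lra). unfold A, K; lra.
  - set (M := cl + cr + 2*Rabs (vl - vr) + 1).
    assert (EM : M = cl + cr + 2*Rabs (vl - vr) + 1) by reflexivity. clearbody M.
    pose proof (Rabs_pos (vl - vr)). pose proof (Rle_abs (vl - vr)).
    assert (HaM : a < M) by lra.
    assert (Hfa : P2 cr vr a - P1 cl vl a < 0).
    { rewrite P1_lo, P2_lo by auto. unfold A, K in *; lra. }
    assert (Hfm : 0 < P2 cr vr M - P1 cl vl M).
    { rewrite P1_hi, P2_hi by (auto; lra). unfold S1, S2.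
      assert (HM1 : cl < M) by lra. assert (HM2 : cr < M) by lra.
      destruct (rr_facts cl M Hcl HM1) as [R0 [R2 [R1 R3]]].
      destruct (rr_facts cr M Hcr HM2) as [Q0 [Q2 [Q1 Q3]]].
      assert (T2 : 0 <= (M*M - cr*cr) * rr cr M / (cr*M)).
      { apply Rmult_le_pos; [apply Rmult_le_pos; nra|].
        left; apply Rinv_0_lt_compat; nra. }
      assert (Rh : rr cl M > M/2) by nra.
      assert (T1 : (M*M - cl*cl) * rr cl M / (cl*M) >= (M - cl)/2).
      { apply Rle_ge. apply (Rmult_le_reg_r (cl*M)); [nra|].
        replace ((M*M - cl*cl) * rr cl M / (cl*M) * (cl*M)) with ((M*M - cl*cl) * rr cl M)
          by (field; lra).
        assert ((M*M - cl*cl) * rr cl M >= (M*M - cl*cl) * (M/2)).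
        { apply Rle_ge; apply Rmult_le_compat_l; [nra|lra]. }
        assert ((M*M - cl*cl) * (M/2) - (M - cl)/2 * (cl*M) = (M-cl)*M*M/2) by field.
        assert (0 <= (M-cl)*M*M/2) by (apply Rmult_le_pos; [|lra]; apply Rmult_le_pos; nra).
        lra. }
      assert ((M - cl)/2 > vl - vr) by (rewrite EM; lra). lra. }
    destruct (Ranalysis5.IVT_interv (fun c => P2 cr vr c - P1 cl vl c) a M) as [z [Hz1 Hz2]]; auto.
    + intros; apply cont_f; auto.
    + exists z. split; [lra|]. simpl in Hz2. lra.
Qed.

Lemma S1_le k w c : 0 < k -> k <= c -> S1 k w c <= w.
Proof.
  intros. unfold S1. assert (0 <= (c*c - k*k) * rr k c / (k*c)); [|lra].
  apply Rmult_le_pos; [apply Rmult_le_pos; [nra|unfold rr; apply sqrt_pos]|].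
  left; apply Rinv_0_lt_compat; nra.
Qed.
Lemma S2_ge k w c : 0 < k -> k <= c -> w <= S2 k w c.
Proof.
  intros. unfold S2. assert (0 <= (c*c - k*k) * rr k c / (k*c)); [|lra].
  apply Rmult_le_pos; [apply Rmult_le_pos; [nra|unfold rr; apply sqrt_pos]|].
  left; apply Rinv_0_lt_compat; nra.
Qed.

Lemma existence g ul ur : 0 < g -> 0 < hh ul -> 0 < hh ur ->
  subcritical g ul -> subcritical g ur -> exists u, junction_ok g ul ur u u.
Proof.
  intros Hg Hl Hr Sl Sr.
  pose proof (subcrit_bounds g ul Hg Hl Sl) as Bl.
  pose proof (subcrit_bounds g ur Hg Hr Sr) as Br.
  pose proof (cel_pos g ul Hg Hl) as Hcl. pose proof (cel_pos g ur Hg Hr) as Hcr.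
  pose proof (mk_repr g ul Hg Hl) as Eul. pose proof (mk_repr g ur Hg Hr) as Eur.
  set (cl := cel g ul) in *. set (vl := vel ul) in *.
  set (cr := cel g ur) in *. set (vr := vel ur) in *.
  clearbody cl vl cr vr.
  destruct (root_exists cl vl cr vr Hcl Hcr Bl Br) as [c0 [Hc0 Heq]].
  set (v0 := P1 cl vl c0) in *.
  assert (Hm0 : 0 < hh (mk g c0 v0)) by (apply hh_mk; auto).
  destruct (Rlt_dec (v0 + c0) 0) as [HA|HA].
  -
    set (cA := - (vr - 2*cr)/3).
    assert (HcA : 0 < cA) by (unfold cA; lra).
    assert (Hc0r : c0 <= cr).
    { destruct (Rle_dec c0 cr) as [|Hn]; auto. exfalso.
      rewrite P2_hi in Heq by lra. pose proof (S2_ge cr vr c0 Hcr ltac:(lra)). lra. }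
    rewrite P2_lo in Heq by auto.
    exists (mk g cA (-cA)).
    assert (HuA : 0 < hh (mk g cA (-cA))) by (apply hh_mk; auto).
    repeat split; auto.
    + exists (mk g c0 v0). split; auto. split.
      * rewrite Eul at 1. apply wave1_build; auto. fold v0; lra.
      * right; right. unfold rare2, lam2. rewrite !vel_mk, !cel_mk by auto.
        unfold cA in *. split; [split|]; lra.
    + exists (mk g cA (-cA)). split; auto. split; [left; auto|].
      rewrite Eur at 1.
      assert (E : -cA = P2 cr vr cA).
      { rewrite P2_lo by (auto; unfold cA; lra). unfold cA; lra. }
      rewrite E. apply wave2_build; auto. rewrite <- E; lra.
  - destruct (Rlt_dec 0 (v0 - c0)) as [HB|HB].
    +
      set (cB := (vl + 2*cl)/3).
      assert (HcB : 0 < cB) by (unfold cB; lra).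
      assert (Hc0l : c0 <= cl).
      { destruct (Rle_dec c0 cl) as [|Hn]; auto. exfalso.
        assert (v0 = S1 cl vl c0) by (unfold v0; apply P1_hi; lra).
        pose proof (S1_le cl vl c0 Hcl ltac:(lra)). lra. }
      assert (Ev0 : v0 = vl + 2*cl - 2*c0) by (unfold v0; apply P1_lo; auto).
      exists (mk g cB cB).
      assert (HuB : 0 < hh (mk g cB cB)) by (apply hh_mk; auto).
      repeat split; auto.
      * exists (mk g cB cB). split; auto. split; [|left; auto].
        rewrite Eul at 1.
        assert (E : cB = P1 cl vl cB).
        { rewrite P1_lo by (auto; unfold cB; lra). unfold cB; lra. }
        rewrite E at 2. apply wave1_build; auto. rewrite <- E; lra.
      * exists (mk g c0 v0). split; auto. split.
        -- right; right. unfold rare1, lam1. rewrite !vel_mk, !cel_mk by auto.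
           unfold cB in *. split; [split|]; lra.
        -- rewrite Eur at 1. rewrite Heq. apply wave2_build; auto. rewrite <- Heq; lra.
    + exists (mk g c0 v0). repeat split; auto.
      * exists (mk g c0 v0). split; auto. split; [|left; auto].
        rewrite Eul at 1. apply wave1_build; auto. fold v0; lra.
      * exists (mk g c0 v0). split; auto. split; [left; auto|].
        rewrite Eur at 1. rewrite Heq. apply wave2_build; auto. rewrite <- Heq; lra.
Qed.

Theorem mainTheorem1 (g : R) (ul ur : state) :
  0 < g -> 0 < hh ul -> 0 < hh ur ->
  subcritical g ul -> subcritical g ur ->
  exists u1 u2 : state,
    junction_ok g ul ur u1 u2 /\
    (forall u1' u2' : state, junction_ok g ul ur u1' u2' -> u1' = u1 /\ u2' = u2).
Proof.
  intros Hg Hl Hr Sl Sr.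
  destruct (existence g ul ur Hg Hl Hr Sl Sr) as [u Hu].
  exists u, u. split; auto.
  intros u1' u2' H. apply (junction_unique g ul ur u u); auto.
Qed.
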